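(* Let $\mathscr{H}$ be a real Hilbert space and let $\mathcal{V}=\{v_n\}_{n=0}^\infty\subset\mathscr{H}$ be a sequence without positive relations such that $\mathcal{C}[[\mathcal{V}]]$ is closed. For $S\subset\mathbb{N}$ let \[ \mathscr{H}(\mathcal{V},S)=\Big\{w\in\mathscr{H} : P_{\mathcal{C}[[\mathcal{V}]]}(w)=\sum_{n\in S}a_nv_n\ \text{with } a_n>0\text{ for all }n\in S\Big\}. \] Then $\mathscr{H}=\bigsqcup_{S\subset\mathbb{N}}\mathscr{H}(\mathcal{V},S)$ (a disjoint union). Moreover, for every $S\subset\mathbb{N}$, the set $\{0\}\cup\mathscr{H}(\mathcal{V},S)$ is a convex cone, and for all $\lambda_1,\lambda_2>0$ and all $w_1,w_2\in\mathscr{H}(\mathcal{V},S)$, \[ P_{\mathcal{C}[[\mathcal{V}]]}(\lambda_1w_1+\lambda_2w_2)=\lambda_1P_{\mathcal{C}[[\mathcal{V}]]}(w_1)+\lambda_2P_{\mathcal{C}[[\mathcal{V}]]}(w_2). \]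
   Context: $\mathbb{N}=\{0,1,2,\dots\}$. $\mathcal{C}[[\mathcal{V}]]=\{\sum_{n=0}^\infty a_n v_n : a_n\ge 0,\ \text{the series converges in }\mathscr{H}\}$ (convergence of partial sums). For $S\subset\mathbb{N}$, $\sum_{n\in S}a_nv_n$ means $\lim_{N\to\infty}\sum_{n\in S,\,n\le N}a_nv_n$, and the empty sum is $0$. A sequence has no positive relations if $\sum a_nv_n=\sum b_nv_n$ for convergent series with $a_n,b_n\ge0$ implies $a_n=b_n$ for all $n$. $P_K$ denotes the metric projection onto a closed convex set $K$ (the unique nearest point). *)

(* Defs.v *)
From HB Require Import structures.
From mathcomp Require Import all_boot all_order all_algebra.
From mathcomp Require Import all_classical all_reals all_analysis.
Set Implicit Arguments. Unset Strict Implicit. Unset Printing Implicit Defensive.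
Import Order.TTheory GRing.Theory Num.Theory.
Import numFieldNormedType.Exports.
Local Open Scope classical_set_scope.
Local Open Scope ring_scope.

Section Defs.
Context {R : realType} {H : completeNormedModType R}.

(* ip is a real inner product inducing the norm of H: together with the
   completeness of H this makes H a real Hilbert space. *)
Definition inner_product_of_norm (ip : H -> H -> R) : Prop :=
  [/\ (forall x y, ip x y = ip y x),
      (forall (a : R) x y z, ip (a *: x + y) z = a * ip x z + ip y z)
    & (forall x, `|x| ^+ 2 = ip x x)].

Definition sum_over (S : set nat) (u : nat -> H) (x : H) : Prop :=
  series (fun n => if n \in S then u n else 0) @ \oo --> x.

Definition pos_cone (v : nat -> H) : set H :=
  [set x | exists a : nat -> R, (forall n, 0 <= a n) /\
                                sum_over setT (fun n => a n *: v n) x].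

Definition no_positive_relations (v : nat -> H) : Prop :=
  forall (a b : nat -> R) (x : H),
    (forall n, 0 <= a n) -> (forall n, 0 <= b n) ->
    sum_over setT (fun n => a n *: v n) x ->
    sum_over setT (fun n => b n *: v n) x ->
    forall n, a n = b n.

Definition is_nearest (K : set H) (w p : H) : Prop :=
  K p /\ forall q, K q -> `|w - p| <= `|w - q|.

(* metric projection P_K: the (unique, when K is nonempty closed convex in a
   Hilbert space) nearest point *)
Definition metric_proj (K : set H) (w : H) : H := xget 0 (is_nearest K w).

Definition HVS (v : nat -> H) (S : set nat) : set H :=
  [set w | exists a : nat -> R, (forall n, S n -> 0 < a n) /\
           sum_over S (fun n => a n *: v n) (metric_proj (pos_cone v) w)].

Definition convex_cone (K : set H) : Prop :=
  forall (l1 l2 : R) x y, 0 <= l1 -> 0 <= l2 -> K x -> K y ->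
    K (l1 *: x + l2 *: y).

End Defs.

(* Main.v *)
Require Import Defs.
From HB Require Import structures.
From mathcomp Require Import all_boot all_order all_algebra.
From mathcomp Require Import all_classical all_reals all_analysis.
From mathcomp Require Import ring lra.
Import Order.TTheory GRing.Theory Num.Theory.
Import numFieldNormedType.Exports.
Local Open Scope classical_set_scope.
Local Open Scope ring_scope.

Section IP.
Context {R : realType} {H : completeNormedModType R} {ip : H -> H -> R}
  (hip : inner_product_of_norm ip).

Lemma ipC x y : ip x y = ip y x.
Proof. by case: hip. Qed.
Lemma ipl a x y z : ip (a *: x + y) z = a * ip x z + ip y z.
Proof. by case: hip. Qed.
Lemma ipn x : `|x| ^+ 2 = ip x x.
Proof. by case: hip. Qed.

Lemma ip0l z : ip 0 z = 0.
Proof.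
have := ipl 1 0 0 z; rewrite scaler0 !addr0 mul1r => h; lra.
Qed.
Lemma ipDl x y z : ip (x + y) z = ip x z + ip y z.
Proof. by rewrite -[x in ip (x + _)]scale1r ipl mul1r. Qed.
Lemma ipZl a x z : ip (a *: x) z = a * ip x z.
Proof. by rewrite -[a *: x]addr0 ipl ip0l addr0. Qed.
Lemma ipNl x z : ip (- x) z = - ip x z.
Proof. by rewrite -scaleN1r ipZl mulN1r. Qed.
Lemma ipBl x y z : ip (x - y) z = ip x z - ip y z.
Proof. by rewrite ipDl ipNl. Qed.
Lemma ipDr x y z : ip z (x + y) = ip z x + ip z y.
Proof. by rewrite ipC ipDl !(ipC z). Qed.
Lemma ipZr a x z : ip z (a *: x) = a * ip z x.
Proof. by rewrite ipC ipZl ipC. Qed.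
Lemma ipNr x z : ip z (- x) = - ip z x.
Proof. by rewrite ipC ipNl ipC. Qed.
Lemma ipBr x y z : ip z (x - y) = ip z x - ip z y.
Proof. by rewrite ipDr ipNr. Qed.
Lemma ip0r z : ip z 0 = 0.
Proof. by rewrite ipC ip0l. Qed.

Lemma normB2 x y : `|x - y| ^+ 2 = `|x| ^+ 2 - 2 * ip x y + `|y| ^+ 2.
Proof. rewrite !ipn ipBl !ipBr (ipC y x); ring. Qed.
Lemma normD2 x y : `|x + y| ^+ 2 = `|x| ^+ 2 + 2 * ip x y + `|y| ^+ 2.
Proof. rewrite !ipn ipDl !ipDr (ipC y x); ring. Qed.

Lemma ip_polar x y : ip x y = (`|x + y| ^+ 2 - `|x| ^+ 2 - `|y| ^+ 2) / 2.
Proof. by rewrite normD2; field. Qed.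

Lemma ip_sum x (u : nat -> H) N : ip x (series u N) = series (fun k => ip x (u k)) N.
Proof.
rewrite /series /=; elim: N => [|N IH]; first by rewrite !big_geq // ip0r.
by rewrite !big_nat_recr //= ipDr IH.
Qed.

Lemma ip_cvg x (u : nat -> H) s : u @ \oo --> s -> (fun k => ip x (u k)) @ \oo --> ip x s.
Proof.
move=> us.
have -> : (fun k => ip x (u k)) = (fun k => (`|x + u k| ^+ 2 - `|x| ^+ 2 - `|u k| ^+ 2) / 2).
  by apply: funext => k; rewrite ip_polar !expr2.
rewrite ip_polar !expr2.
apply: cvgMl. apply: cvgB. apply: cvgB. apply: cvgM. apply: cvg_norm. apply: cvgD.
exact: cvg_cst. exact: us. apply: cvg_norm. apply: cvgD. exact: cvg_cst. exact: us.
exact: cvg_cst. apply: cvgM; apply: cvg_norm; exact: us.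
Qed.

Lemma ip_series x (u : nat -> H) s : series u @ \oo --> s ->
  series (fun k => ip x (u k)) @ \oo --> ip x s.
Proof.
move=> /(ip_cvg x); apply: cvg_trans; apply: near_eq_cvg; near=> N.
by rewrite ip_sum.
Unshelve. all: by end_near. Qed.

End IP.

Lemma real_lim_le0 {R : realType} (c M : R) : 0 <= M ->
  (forall t, 0 < t -> t < 1 -> 2 * t * c <= t ^+ 2 * M) -> c <= 0.
Proof.
move=> M0 h; rewrite leNgt; apply/negP => c0.
set t := c / (c + M + 1).
have ht : t * (c + M + 1) = c by rewrite /t; field; lra.
have t0 : 0 < t by rewrite /t divr_gt0 //; lra.
have t1 : t < 1 by rewrite /t ltr_pdivrMr; lra.
have := h t t0 t1.
have -> : t ^+ 2 * M = t * (t * M) by rewrite expr2 mulrA.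
have e : t * M = c - t * c - t by lra.
rewrite e => hh. nra.
Qed.

Lemma sq_le {R : realType} (a b : R) : 0 <= a -> 0 <= b -> a ^+ 2 <= b ^+ 2 -> a <= b.
Proof. move=> a0 b0; rewrite !expr2 => h; nra. Qed.

Section Proj.
Context {R : realType} {H : completeNormedModType R} (ip : H -> H -> R)
  (hip : inner_product_of_norm ip) (K : set H) (hK : convex_cone K).

Lemma nearest_VI {w p q} : is_nearest K w p -> K q -> ip (w - p) (q - p) <= 0.
Proof.
move=> [Kp np] Kq.
apply: (@real_lim_le0 _ _ (`|q - p| ^+ 2)); first by rewrite exprn_ge0.
move=> t t0 t1.
have Kt : K ((1 - t) *: p + t *: q) by apply: hK => //; lra.
have := np _ Kt.
have -> : w - ((1 - t) *: p + t *: q) = (w - p) - t *: (q - p).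
  by rewrite scalerBl scale1r scalerBr !opprD !opprK !addrA addrAC.
move=> hle.
have : `|w - p| ^+ 2 <= `|w - p - t *: (q - p)| ^+ 2.
  by rewrite !expr2; apply: ler_pM.
rewrite (normB2 hip (w - p) (t *: (q - p))) (ipZr hip) normrZ exprMn ger0_norm ?(ltW t0) //.
lra.
Qed.

Lemma nearest_cone {w p} : is_nearest K w p ->
  (forall q, K q -> ip (w - p) q <= 0) /\ ip (w - p) p = 0.
Proof.
move=> hn; have Kp := hn.1.
have K0 : K 0 by have := hK 0 0 p p (lexx 0) (lexx 0) Kp Kp; rewrite !scale0r addr0.
have h0 := nearest_VI hn K0.
have h2 : K (2 *: p) by have := hK 2 0 p p ltac:(lra) (lexx 0) Kp Kp; rewrite scale0r addr0.
have h2' := nearest_VI hn h2.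
rewrite sub0r (ipNr hip) in h0.
have e : 2 *: p - p = p by rewrite scalerDl scale1r addrK.
rewrite e in h2'.
split; last by lra.
move=> q Kq.
have Kpq : K (p + q) by have := hK 1 1 p q ler01 ler01 Kp Kq; rewrite !scale1r.
by have := nearest_VI hn Kpq; rewrite addrAC subrr add0r.
Qed.

Lemma cone_nearest w p : K p -> (forall q, K q -> ip (w - p) q <= 0) ->
  ip (w - p) p = 0 -> is_nearest K w p.
Proof.
move=> Kp h1 h2; split => // q Kq.
apply: sq_le => //.
have -> : w - q = (w - p) - (q - p) by rewrite opprB addrA subrK.
rewrite (normB2 hip (w - p) (q - p)) (ipBr hip) h2.
have := h1 _ Kq; have := exprn_ge0 2 (normr_ge0 (q - p)); lra.
Qed.

Lemma nearest_unique {w p1 p2} : is_nearest K w p1 -> is_nearest K w p2 -> p1 = p2.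
Proof.
move=> h1 h2.
have a := nearest_VI h1 h2.1; have b := nearest_VI h2 h1.1.
have : `|p2 - p1| ^+ 2 <= 0.
  rewrite (ipn hip).
  have -> : p2 - p1 = (w - p1) - (w - p2) by rewrite opprB [RHS]addrC addrA subrK.
  rewrite (ipBl hip) !(ipBr hip).
  have e : p1 - p2 = - (p2 - p1) by rewrite opprB.
  rewrite e (ipNr hip) in b.
  rewrite !(ipBr hip) in a; rewrite !(ipBr hip) in b.
  lra.
move=> h; apply/eqP; rewrite eq_sym -subr_eq0 -normr_eq0.
have := exprn_ge0 2 (normr_ge0 (p2 - p1)).
rewrite expr2 => h'; rewrite expr2 in h; nra.
Qed.

End Proj.

Section Exist.
Context {R : realType} {H : completeNormedModType R} {ip : H -> H -> R}
  (hip : inner_product_of_norm ip) (K : set H) (hK : convex_cone K).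

Lemma parallelogram (w a b : H) :
  `|a - b| ^+ 2 = 2 * `|w - a| ^+ 2 + 2 * `|w - b| ^+ 2
                  - 4 * `|w - (2^-1 *: a + 2^-1 *: b)| ^+ 2.
Proof.
rewrite !(ipn hip).
have L1 := ipBl hip; have L2 := ipDl hip; have L3 := ipZl hip.
have L4 := ipBr hip; have L5 := ipDr hip; have L6 := ipZr hip.
have L7 := ipNl hip; have L8 := ipNr hip.
rewrite !(L1, L2, L3, L4, L5, L6, L7, L8).
rewrite (ipC hip b a) (ipC hip a w) (ipC hip b w).
by field.
Qed.

Lemma nearest_exists (K0 : K 0) (Kc : closed K) w : exists p, is_nearest K w p.
Proof.
set E := [set r | exists2 q, K q & r = `|w - q| ^+ 2].
have lbE : has_lbound E.
  by exists 0 => r [q _ ->]; rewrite exprn_ge0.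
have hinf : has_inf E by split => //; exists (`|w - 0| ^+ 2); exists 0.
set D := inf E.
have Dle : forall q, K q -> D <= `|w - q| ^+ 2.
  by move=> q Kq; apply: (ge_inf lbE); exists q.
have : forall n : nat, exists q, K q /\ `|w - q| ^+ 2 < D + n.+1%:R^-1.
  move=> n; have [e [q Kq ->] elt] := @inf_adherent R E n.+1%:R^-1 ltac:(by []) hinf.
  by exists q.
move=> /choice [q hq].
have par : forall n m : nat, `|q n - q m| ^+ 2 <= 2 * n.+1%:R^-1 + 2 * m.+1%:R^-1.
  move=> n m; rewrite (parallelogram w).
  have Kmid : K (2^-1 *: q n + 2^-1 *: q m).
    by apply: hK; [rewrite invr_ge0| rewrite invr_ge0| exact: (hq n).1| exact: (hq m).1].
  have := Dle _ Kmid; have := (hq n).2; have := (hq m).2.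
  move: (n.+1%:R^-1 : R) (m.+1%:R^-1 : R) => x y h1 h2 h3; lra.
have cq : cvg (q @ \oo).
  apply/cauchy_cvgP/cauchy_exP => e e0.
  have e2 : 0 < e ^+ 2 / 4 by rewrite divr_gt0 // exprn_gt0.
  have [N _ hN] := near_infty_natSinv_lt (PosNum e2).
  exists (q N).
  exists N => // n /= hn.
  rewrite -ball_normE /=.
  have hNN := hN N (leqnn N); rewrite /= in hNN.
  have hnN : n.+1%:R^-1 <= N.+1%:R^-1 :> R.
    by rewrite lef_pV2 ?posrE // ler_nat ltnS.
  have := par N n.
  have := normr_ge0 (q N - q n).
  move: (`|q N - q n|) => x x0 hx.
  rewrite !expr2 in hx hNN *.
  move: hx hNN hnN; move: (N.+1%:R^-1 : R) (n.+1%:R^-1 : R) => a b hx hNN hnN.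
  have : x * x < e * e by lra.
  move=> h; nra.
set p := lim (q @ \oo).
have qp : q @ \oo --> p := cq.
have Kp : K p.
  apply: (@closed_cvg _ _ \oo _ q K Kc _ p qp); apply: nearW => n; exact: (hq n).1.
exists p; split => // q' Kq'.
apply: sq_le => //.
have c1 : (fun n => `|w - q n| ^+ 2 - n.+1%:R^-1) @ \oo --> `|w - p| ^+ 2 - 0.
  apply: cvgB; last exact: cvg_harmonic.
  rewrite !expr2; apply: cvgM; apply: cvg_norm; apply: cvgB => //; exact: cvg_cst.
rewrite subr0 in c1.
apply: (ler_cvg_to c1 (cvg_cst (`|w - q'| ^+ 2))).
apply: nearW => n /=.
have := (hq n).2; have := Dle q' Kq'; move: (n.+1%:R^-1 : R) => a h1 h2; lra.
Qed.

End Exist.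

Section Main.
Context {R : realType} {H : completeNormedModType R} {ip : H -> H -> R}
  (hip : inner_product_of_norm ip) (v : nat -> H).

Local Notation K := (pos_cone v).

Lemma sum_overT (u : nat -> H) x : sum_over setT u x <-> series u @ \oo --> x.
Proof.
rewrite /sum_over.
have -> : (fun n => if n \in setT then u n else 0) = u.
  by apply: funext => n; rewrite in_setT.
by [].
Qed.

Lemma cone_cc : convex_cone K.
Proof.
move=> l1 l2 x y l10 l20 [a [a0 ha]] [b [b0 hb]].
exists (fun n => l1 * a n + l2 * b n); split.
  by move=> n; apply: addr_ge0; apply: mulr_ge0.
apply/sum_overT; move/sum_overT: ha => ha; move/sum_overT: hb => hb.
have -> : (fun n => (l1 * a n + l2 * b n) *: v n) =
   l1 *: (fun n => a n *: v n) + l2 *: (fun n => b n *: v n).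
  by apply: funext => n; rewrite !fctE scalerDl !scalerA.
rewrite seriesD !seriesZ.
apply: cvgD; apply: cvgZ => //; exact: cvg_cst.
Qed.

Lemma cone0 : K 0.
Proof.
exists (fun=> 0); split => // ; apply/sum_overT.
have -> : series (fun n => (0:R) *: v n) = fun=> 0.
  apply: funext => N; rewrite /series /=; apply: big1 => i _; exact: scale0r.
exact: cvg_cst.
Qed.

Lemma cone_v m : K (v m).
Proof.
exists (fun n => (n == m)%:R); split; first by move=> n; rewrite ler0n.
apply/sum_overT.
apply: cvg_trans (cvg_cst (v m)).
apply: (@near_eq_cvg _ _ \oo _ (fun=> v m)); last first. exists m.+1 => // N /= hN.
apply/esym; rewrite /series /=.
elim: N hN => [//|N IH hN].
rewrite big_nat_recr //=.
case: (ltngtP m N) => hmN.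
- by rewrite IH // scale0r addr0.
- by move: hN; rewrite ltnS leqNgt hmN.
- subst m; rewrite ?eqxx scale1r big1_seq ?add0r // => i.
  by rewrite mem_index_iota => /andP [_ hi]; rewrite (ltn_eqF hi) scale0r.
exact: filter_filter.
Qed.

Definition PK := metric_proj K.

Lemma P_near (hcl : closed K) w : is_nearest K w (PK w).
Proof.
apply: xgetPex. have := nearest_exists hip _ cone_cc cone0 hcl w. exact.
Qed.

Lemma P_eq (hcl : closed K) w p : is_nearest K w p -> PK w = p.
Proof. move=> h; exact: (nearest_unique _ hip _ cone_cc (P_near hcl w) h). Qed.


Lemma zero_on_S (hcl : closed K) (S : set nat) a w :
  (forall n, S n -> 0 < a n) -> sum_over S (fun n => a n *: v n) (PK w) ->
  forall n, S n -> ip (w - PK w) (v n) = 0.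
Proof.
move=> ha hs n Sn; rewrite /sum_over in hs.
set x := w - PK w.
have [hneg hp0] := nearest_cone _ hip _ cone_cc (P_near hcl w).
set c := fun m => ip x (if m \in S then a m *: v m else 0).
have cle : forall m, c m <= 0.
  move=> m; rewrite /c; case: ifP => [/set_mem Sm|_]; last by rewrite (ip0r hip).
  rewrite (ipZr hip); apply: mulr_ge0_le0; first exact: ltW (ha m Sm).
  exact: hneg (cone_v m).
have hc : series c @ \oo --> 0.
  rewrite -hp0 /c /x; exact: (ip_series hip (w - PK w) _ _ hs).
have ni : nonincreasing_seq (series c).
  apply/nonincreasing_seqP => N; rewrite /series /= big_nat_recr //=.
  by have := cle N; lra.
have lb := nonincreasing_cvgn_ge ni (cvgP _ hc) n.+1.
rewrite (norm_cvg_lim hc) in lb; move: lb; rewrite /series /= big_nat_recr //= => lb.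
have sn0 : \sum_(0 <= k < n) c k <= 0.
  by apply: sumr_le0 => i _; exact: cle.
have cn0 : c n = 0 by have := cle n; lra.
move: cn0; rewrite /c (mem_set Sn) (ipZr hip) => /eqP.
by rewrite mulf_eq0 (gt_eqF (ha n Sn)) /= => /eqP.
Qed.

Lemma ip_zero_sum (S : set nat) b x y :
  (forall n, S n -> ip x (v n) = 0) -> sum_over S (fun n => b n *: v n) y ->
  ip x y = 0.
Proof.
move=> h0 hs; rewrite /sum_over in hs; have := ip_series hip x _ _ hs.
have -> : series (fun k => ip x (if k \in S then b k *: v k else 0)) = fun=> 0.
  apply: funext => N; rewrite /series /=; apply: big1 => i _.
  case: ifP => [/set_mem Si|_]; last exact: (ip0r hip).
  by rewrite (ipZr hip) h0 // mulr0.
by move=> h; rewrite -(norm_cvg_lim h) (norm_cvg_lim (cvg_cst 0)).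
Qed.

Lemma part4 (hcl : closed K) (S : set nat) (l1 l2 : R) (w1 w2 : H) :
  0 < l1 -> 0 < l2 -> HVS v S w1 -> HVS v S w2 ->
  PK (l1 *: w1 + l2 *: w2) = l1 *: PK w1 + l2 *: PK w2.
Proof.
move=> l10 l20 [a [ha sa]] [b [hb sb]].
have [n1 e1] := nearest_cone _ hip _ cone_cc (P_near hcl w1).
have [n2 e2] := nearest_cone _ hip _ cone_cc (P_near hcl w2).
have z1 := zero_on_S hcl _ _ _ ha sa.
have z2 := zero_on_S hcl _ _ _ hb sb.
have f12 := ip_zero_sum _ _ _ _ z1 sb.
have f21 := ip_zero_sum _ _ _ _ z2 sa.
apply: P_eq => //.
have Kp : K (l1 *: PK w1 + l2 *: PK w2).
  by apply: cone_cc; [exact: ltW|exact: ltW|exact: (P_near hcl w1).1|exact: (P_near hcl w2).1].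
have eqd : l1 *: w1 + l2 *: w2 - (l1 *: PK w1 + l2 *: PK w2) =
          l1 *: (w1 - PK w1) + l2 *: (w2 - PK w2).
  by rewrite !scalerBr opprD !addrA; congr (_ + _); rewrite addrAC.
apply: (cone_nearest _ hip) => //; rewrite eqd.
  move=> q Kq; rewrite (ipDl hip) !(ipZl hip).
  have := n1 _ Kq; have := n2 _ Kq; move=> h1 h2; nra.
rewrite (ipDl hip) !(ipZl hip) !(ipDr hip) !(ipZr hip) e1 e2 f12 f21.
by rewrite !(mulr0, addr0).
Qed.

Lemma hvs_comb (hcl : closed K) (S : set nat) (l1 l2 : R) (w1 w2 : H) :
  0 < l1 -> 0 < l2 -> HVS v S w1 -> HVS v S w2 -> HVS v S (l1 *: w1 + l2 *: w2).
Proof.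
move=> l10 l20 h1 h2.
have e := part4 hcl _ _ _ _ _ l10 l20 h1 h2.
move: h1 h2 => [a [ha sa]] [b [hb sb]].
exists (fun n => l1 * a n + l2 * b n); split.
  by move=> n Sn; apply: addr_gt0; apply: mulr_gt0 => //; [exact: ha|exact: hb].
rewrite /sum_over in sa sb *.
change (metric_proj K (l1 *: w1 + l2 *: w2)) with (PK (l1 *: w1 + l2 *: w2)).
rewrite e.
have -> : (fun n => if n \in S then (l1 * a n + l2 * b n) *: v n else 0) =
   l1 *: (fun n => if n \in S then a n *: v n else 0) +
   l2 *: (fun n => if n \in S then b n *: v n else 0).
  apply: funext => n; rewrite !fctE; case: ifP => _.
    by rewrite scalerDl !scalerA.
  by rewrite !scaler0 addr0.
rewrite seriesD !seriesZ.
apply: cvgD; apply: cvgZ => //; exact: cvg_cst.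
Qed.

Lemma hvs_scale (hcl : closed K) (S : set nat) (c : R) (w : H) :
  0 < c -> HVS v S w -> HVS v S (c *: w).
Proof.
move=> c0 hw.
have -> : c *: w = (c / 2) *: w + (c / 2) *: w.
  by rewrite -scalerDl; congr (_ *: _); field.
by apply: hvs_comb => //; rewrite divr_gt0.
Qed.

End Main.

Theorem corollary1p4 (R : realType) (H : completeNormedModType R)
  (ip : H -> H -> R) (v : nat -> H) :
  inner_product_of_norm ip ->
  no_positive_relations v ->
  closed (pos_cone v) ->
  [/\ (forall w : H, exists S : set nat, HVS v S w),
      (forall (S T : set nat) (w : H), HVS v S w -> HVS v T w -> S = T),
      (forall S : set nat, convex_cone ([set 0] `|` HVS v S))
    & (forall (S : set nat) (l1 l2 : R) (w1 w2 : H),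
        0 < l1 -> 0 < l2 -> HVS v S w1 -> HVS v S w2 ->
        metric_proj (pos_cone v) (l1 *: w1 + l2 *: w2) =
        l1 *: metric_proj (pos_cone v) w1 + l2 *: metric_proj (pos_cone v) w2)].
Proof.
move=> hip hnpr hcl.
split.
- move=> w.
  have [a [a0 ha]] := (P_near hip v hcl w).1.
  exists [set n | 0 < a n]; exists a; split => //.
  move: ha; rewrite /sum_over.
  have -> : (fun n => if n \in [set n | 0 < a n] then a n *: v n else 0) =
            (fun n => if n \in setT then a n *: v n else 0).
    apply: funext => n; rewrite in_setT; case: ifP => // /negP hn.
    have h : ~ 0 < a n by move=> h; apply: hn; exact: mem_set.
    have e : a n = 0.
      by move/negP: h; rewrite -leNgt => h; apply/le_anti; rewrite h a0.
    by rewrite e scale0r.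
  by [].
- move=> S T w [a [ha sa]] [b [hb sb]].
  pose a' := fun n => if n \in S then a n else 0.
  pose b' := fun n => if n \in T then b n else 0.
  have sa' : sum_over setT (fun n => a' n *: v n) (metric_proj (pos_cone v) w).
    move: sa; rewrite /sum_over.
    have -> : (fun n => if n \in S then a n *: v n else 0) =
              (fun n => if n \in setT then a' n *: v n else 0).
      by apply: funext => n; rewrite in_setT /a'; case: ifP => _ //; rewrite scale0r.
    by [].
  have sb' : sum_over setT (fun n => b' n *: v n) (metric_proj (pos_cone v) w).
    move: sb; rewrite /sum_over.
    have -> : (fun n => if n \in T then b n *: v n else 0) =
              (fun n => if n \in setT then b' n *: v n else 0).
      by apply: funext => n; rewrite in_setT /b'; case: ifP => _ //; rewrite scale0r.
    by [].
  have a0 : forall n, 0 <= a' n.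
    by move=> n; rewrite /a'; case: ifP => // /set_mem h; exact: ltW (ha n h).
  have b0 : forall n, 0 <= b' n.
    by move=> n; rewrite /b'; case: ifP => // /set_mem h; exact: ltW (hb n h).
  have eq := hnpr a' b' _ a0 b0 sa' sb'.
  apply/seteqP; split => n Sn.
    have := eq n; rewrite /a' /b' (mem_set Sn).
    case: ifP => [/set_mem //|_] h; have := ha n Sn; lra.
  have := eq n; rewrite /a' /b' (mem_set Sn).
  case: ifP => [/set_mem //|_] h; have := hb n Sn; lra.
- move=> S l1 l2 x y l10 l20 hx hy.
  have key : forall c z, 0 < c -> ([set 0] `|` HVS v S) z ->
      ([set 0] `|` HVS v S) (c *: z).
    move=> c z c0 [->|hz]; first by left; rewrite scaler0.
    by right; exact: (hvs_scale hip v hcl _ _ _ c0 hz).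
  move: l10; rewrite le_eqVlt => /orP [/eqP <-|l1p].
    rewrite scale0r add0r.
    move: l20; rewrite le_eqVlt => /orP [/eqP <-|l2p].
      by left; rewrite scale0r.
    exact: key.
  move: l20; rewrite le_eqVlt => /orP [/eqP <-|l2p].
    by rewrite scale0r addr0; exact: key.
  case: hx => [->|hx].
    by rewrite scaler0 add0r; exact: key.
  case: hy => [->|hy].
    by rewrite scaler0 addr0; apply: key => //; right.
  by right; exact: (hvs_comb hip v hcl _ _ _ _ _ l1p l2p hx hy).
- move=> S l1 l2 w1 w2 l10 l20 h1 h2.
  exact: (part4 hip v hcl _ _ _ _ _ l10 l20 h1 h2).
Qed.
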